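(* Let $G$ be a search game (as defined in the context) whose payoffs are ordinally consistent and solitary-search dominant, in which social value outweighs cost, and which admits a redundancy-free pure strategy profile. Then $G$ admits a pure Nash equilibrium $s$ that is cost-inclusive socially optimal, i.e., $U_{CI}(s)=\max_{s'\in S}U_{CI}(s')$.
   Context: A search game $G=(N,\Omega,\Pi,\mu,K,c,v)$ consists of: a finite set of players $N=\{1,\ldots,n\}$; a finite set $\Omega$ of locations; for each player $i$ a partition $\Pi_i$ of $\Omega$, with $\pi_i(\omega)$ the cell containing $\omega$; a common prior $\mu\in\Delta(\Omega)$ with $\mu(\pi_i)>0$ for every cell of every player, and $\mu(\omega|\pi_i)=\mu(\omega)/\mu(\pi_i)$ for $\omega\in\pi_i$; capacities $K_i\in\mathbb{N}$; costs $c_i:\{0,\ldots,K_i\}\to\mathbb{R}_{\ge0}$ with $c_i(0)=0$ and nondecreasing increments $c_i(k+1)-c_i(k)\ge c_i(k)-c_i(k-1)$; rewards $v_i^m(\omega)\ge0$ with $v_i^{m+1}(\omega)\le v_i^m(\omega)$; social values $v_{\mathfrak{s}}(\omega)\ge0$. A pure strategy $s_i$ assigns to each cell $\pi_i$ a subset $s_i(\pi_i)\subseteq\pi_i$ of size at most $K_i$; $S$ is the set of pure profiles. With $m_s(\omega)=\sum_{i}\mathbf{1}_{\omega\in s_i(\pi_i(\omega))}$, player $i$'s payoff is $u_i(s)=\sum_{\omega}\mu(\omega)\big[\mathbf{1}_{\omega\in s_i(\pi_i(\omega))}v_i^{m_s(\omega)}(\omega)-c_i(|s_i(\pi_i(\omega))|)\big]$;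 a pure Nash equilibrium is a pure profile from which no player gains by a unilateral deviation to another pure strategy. The cost-inclusive social payoff is $U_{CI}(s)=\sum_{\omega}\mu(\omega)\big[v_{\mathfrak{s}}(\omega)\mathbf{1}_{m_s(\omega)\ge1}-\sum_{i\in N}c_i(|s_i(\pi_i(\omega))|)\big]$. Payoffs are ordinally consistent if for every player $i$, cell $\pi_i$ and $\omega,\omega'\in\pi_i$: $\mu(\omega)v_i^1(\omega)<\mu(\omega')v_i^1(\omega')$ implies $\mu(\omega)v_{\mathfrak{s}}(\omega)\le\mu(\omega')v_{\mathfrak{s}}(\omega')$. Payoffs are solitary-search dominant if for every player $i$, cell $\pi_i$ and $\omega,\omega'\in\pi_i$: $\mu(\omega|\pi_i)v_i^1(\omega)\ge\mu(\omega'|\pi_i)v_i^2(\omega')$ and $\mu(\omega|\pi_i)v_i^1(\omega)\ge c_i(K_i)-c_i(K_i-1)$. Social value outweighs cost if $\mu(\omega)v_{\mathfrak{s}}(\omega)\ge\mu(\pi_i)\big(c_i(K_i)-c_i(K_i-1)\big)$ for every location $\omega$, player $i$ and cell $\pi_i\in\Pi_i$. A pure profile $s$ is redundancy-free if $|s_i(\pi_i)|=K_i$ for every cell $\pi_i$ of every player $i$, and $m_s(\omega)\le1$ for every $\omega\in\Omega$. *)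

(* Defs.v *)
From mathcomp Require Import all_boot all_order all_algebra.
Set Implicit Arguments. Unset Strict Implicit. Unset Printing Implicit Defensive.
Import Order.TTheory GRing.Theory Num.Theory.
Local Open Scope ring_scope.

Section SearchGame.
Variables (R : realFieldType) (n : nat) (Omega : finType).

(* Partition of each player: a MathComp partition of the whole location set;
   pi_i(w) is pblock (P i) w. *)
Definition cellof (P : 'I_n -> {set {set Omega}}) (i : 'I_n) (w : Omega)
  : {set Omega} := pblock (P i) w.

(* A pure strategy of player i: to each cell C of P i, a subset of C of size <= K i
   (values on non-cells are irrelevant). *)
Definition strategy := {set Omega} -> {set Omega}.
Definition profile := 'I_n -> strategy.

Definition strategy_ok (P : 'I_n -> {set {set Omega}}) (K : 'I_n -> nat)
  (i : 'I_n) (t : strategy) : Prop :=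
  forall C, C \in P i -> t C \subset C /\ (#|t C| <= K i)%N.

Definition profile_ok (P : 'I_n -> {set {set Omega}}) (K : 'I_n -> nat) (s : profile) : Prop := forall i, strategy_ok P K i (s i).

Definition mult (P : 'I_n -> {set {set Omega}}) (s : profile) (w : Omega) : nat :=
  #|[set i : 'I_n | w \in s i (cellof P i w)]|.

Definition deviate (s : profile) (i : 'I_n) (t : strategy) : profile :=
  fun j => if j == i then t else s j.

Definition mass (mu : Omega -> R) (C : {set Omega}) : R := \sum_(w in C) mu w.

Definition payoff (P : 'I_n -> {set {set Omega}}) (mu : Omega -> R) (v : 'I_n -> nat -> Omega -> R)
  (c : 'I_n -> nat -> R) (s : profile) (i : 'I_n) : R :=
  \sum_(w : Omega) mu w *
    ((if w \in s i (cellof P i w) then v i (mult P s w) w else 0)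
     - c i #|s i (cellof P i w)|).

Definition pure_NE (P : 'I_n -> {set {set Omega}}) (K : 'I_n -> nat) (mu : Omega -> R)
  (v : 'I_n -> nat -> Omega -> R) (c : 'I_n -> nat -> R) (s : profile) : Prop :=
  profile_ok P K s /\
  forall i (t : strategy), strategy_ok P K i t ->
    payoff P mu v c (deviate s i t) i <= payoff P mu v c s i.

Definition U_CI (P : 'I_n -> {set {set Omega}}) (mu : Omega -> R) (vs : Omega -> R) (c : 'I_n -> nat -> R)
  (s : profile) : R :=
  \sum_(w : Omega) mu w *
    ((if (0 < mult P s w)%N then vs w else 0)
     - \sum_(i : 'I_n) c i #|s i (cellof P i w)|).

Definition is_search_game (P : 'I_n -> {set {set Omega}}) (mu : Omega -> R)
  (K : 'I_n -> nat) (c : 'I_n -> nat -> R) (v : 'I_n -> nat -> Omega -> R)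
  (vs : Omega -> R) : Prop :=
  (forall i, partition (P i) [set: Omega]) /\
      ((forall w, 0 <= mu w) /\ \sum_(w : Omega) mu w = 1) /\
      (forall i C, C \in P i -> 0 < mass mu C) /\
      (forall i, c i 0%N = 0 /\ (forall k, (k <= K i)%N -> 0 <= c i k) /\
         (forall k, (0 < k)%N -> (k < K i)%N ->
            c i k - c i k.-1 <= c i k.+1 - c i k)) /\
      ((forall i m w, (1 <= m <= n)%N -> 0 <= v i m w) /\
       (forall i m w, (1 <= m)%N -> (m < n)%N -> v i m.+1 w <= v i m w)) /\
      (forall w, 0 <= vs w).

Definition ordinally_consistent (P : 'I_n -> {set {set Omega}}) (mu : Omega -> R)
  (v : 'I_n -> nat -> Omega -> R) (vs : Omega -> R) : Prop :=
  forall i C, C \in P i -> forall w w', w \in C -> w' \in C ->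
    mu w * v i 1%N w < mu w' * v i 1%N w' -> mu w * vs w <= mu w' * vs w'.

Definition margK (K : 'I_n -> nat) (c : 'I_n -> nat -> R) (i : 'I_n) : R :=
  c i (K i) - c i (K i).-1.

Definition solitary_search_dominant (P : 'I_n -> {set {set Omega}}) (mu : Omega -> R)
  (K : 'I_n -> nat) (c : 'I_n -> nat -> R) (v : 'I_n -> nat -> Omega -> R) : Prop :=
  forall i C, C \in P i -> forall w w', w \in C -> w' \in C ->
    mu w' / mass mu C * v i 2%N w' <= mu w / mass mu C * v i 1%N w /\
    margK K c i <= mu w / mass mu C * v i 1%N w.

Definition social_value_outweighs_cost (P : 'I_n -> {set {set Omega}}) (mu : Omega -> R)
  (K : 'I_n -> nat) (c : 'I_n -> nat -> R) (vs : Omega -> R)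
  : Prop :=
  forall w i C, C \in P i -> mass mu C * margK K c i <= mu w * vs w.

Definition redundancy_free (P : 'I_n -> {set {set Omega}}) (K : 'I_n -> nat) (s : profile) : Prop :=
  profile_ok P K s /\
  (forall i C, C \in P i -> #|s i C| = K i) /\
  (forall w, (mult P s w <= 1)%N).

End SearchGame.

(* Main.v *)
Require Import Defs.
From mathcomp Require Import all_boot all_order all_algebra ring lra zify.
From Stdlib Require Import FunctionalExtensionality ClassicalEpsilon Classical.
Set Implicit Arguments. Unset Strict Implicit. Unset Printing Implicit Defensive.
Import Order.TTheory GRing.Theory Num.Theory.
Local Open Scope ring_scope.

Lemma measure_ind (T : Type) (f : T -> nat) (Q : T -> Prop) :
  (forall x, (forall y, (f y < f x)%N -> Q y) -> Q x) -> forall x, Q x.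
Proof.
move=> H x; have [m] := ubnP (f x); elim: m x => // m IH x Hx.
apply: H => y Hy; apply: IH; exact: leq_trans Hy _.
Qed.

Section Proofs.
Variables (R : realFieldType) (n : nat) (Omega : finType)
  (P : 'I_n -> {set {set Omega}}) (mu : Omega -> R) (K : 'I_n -> nat)
  (c : 'I_n -> nat -> R) (v : 'I_n -> nat -> Omega -> R) (vs : Omega -> R).
Hypothesis HP : forall i, partition (P i) [set: Omega].
Hypothesis Hmu : forall w, 0 <= mu w.
Hypothesis Hmass : forall i C, C \in P i -> 0 < mass mu C.
Hypothesis Hcnn : forall i k, (k <= K i)%N -> 0 <= c i k.
Hypothesis Hconv : forall i k, (0 < k)%N -> (k < K i)%N ->
            c i k - c i k.-1 <= c i k.+1 - c i k.
Hypothesis HSV : social_value_outweighs_cost P mu K c vs.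

Notation cell i w := (cellof P i w).
Definition inS (s : profile n Omega) i w := w \in s i (cell i w).

Lemma coverP i : cover (P i) = [set: Omega].
Proof. by case/and3P: (HP i) => /eqP. Qed.
Lemma trivP i : trivIset (P i).
Proof. by case/and3P: (HP i). Qed.

Lemma cell_mem i w : cell i w \in P i.
Proof. by rewrite /cellof pblock_mem // coverP in_setT. Qed.
Lemma mem_cell i w : w \in cell i w.
Proof. by rewrite /cellof mem_pblock coverP in_setT. Qed.
Lemma cell_eq i (C : {set Omega}) w : C \in P i -> w \in C -> cell i w = C.
Proof. move=> HC Hw; exact: def_pblock (trivP i) HC Hw. Qed.
Lemma cellE i (C : {set Omega}) w : C \in P i -> (cell i w == C) = (w \in C).
Proof.
move=> HC; case: (boolP (w \in C)) => Hw; first by rewrite (cell_eq HC Hw) eqxx.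
by apply/negP => /eqP E; move: Hw; rewrite -E mem_cell.
Qed.

Definition upd (s : profile n Omega) j (C X : {set Omega}) : profile n Omega :=
  fun i D => if (i == j) && (D == C) then X else s i D.

Lemma inS_upd s j (C X : {set Omega}) i w : C \in P j ->
  inS (upd s j C X) i w = if (i == j) && (w \in C) then w \in X else inS s i w.
Proof.
move=> HC; rewrite /inS /upd; case: (eqVneq i j) => [->|] //=.
by rewrite (cellE _ HC); case: (w \in C).
Qed.

Lemma upd_ok s j (C X : {set Omega}) : profile_ok P K s -> C \in P j -> X \subset C -> (#|X| <= K j)%N ->
  profile_ok P K (upd s j C X).
Proof.
move=> Hs HC HX HK i D HD; rewrite /upd.
case: (eqVneq i j) => [E|ne] /=; last by apply: (Hs i D HD).
subst i; case: (eqVneq D C) => [->|ne] /=; first by [].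
exact: (Hs j D HD).
Qed.

Lemma upd_same s j (C X : {set Omega}) i D : ~~ ((i == j) && (D == C)) -> upd s j C X i D = s i D.
Proof. by rewrite /upd => /negbTE ->. Qed.
Lemma upd_at s j (C X : {set Omega}) : upd s j C X j C = X.
Proof. by rewrite /upd !eqxx. Qed.

Definition costS (s : profile n Omega) :=
  \sum_w mu w * \sum_i c i #|s i (cell i w)|.
Definition SL (f : 'I_n -> {set Omega} -> nat -> R) (s : profile n Omega) :=
  \sum_i \sum_(D in P i) f i D #|s i D|.

Lemma sum_cells i (F : Omega -> R) : \sum_w F w = \sum_(D in P i) \sum_(w in D) F w.
Proof.
rewrite -(big_trivIset _ (trivP i)) coverP.
by apply: eq_bigl => w; rewrite in_setT.
Qed.

Lemma costS_SL s : costS s = SL (fun i D k => mass mu D * c i k) s.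
Proof.
rewrite /costS /SL.
under eq_bigr do rewrite mulr_sumr.
rewrite exchange_big /=; apply: eq_bigr => i _.
rewrite (sum_cells i); apply: eq_bigr => D HD.
rewrite /mass mulr_suml; apply: eq_bigr => w Hw.
by rewrite (cell_eq HD Hw).
Qed.

Lemma SL_upd f s j (C X : {set Omega}) : C \in P j ->
  SL f (upd s j C X) = SL f s + (f j C #|X| - f j C #|s j C|).
Proof.
move=> HC; rewrite /SL (bigD1 j) //= [in RHS](bigD1 j) //=.
rewrite (bigD1 C) //= [in X in _ = X + _](bigD1 C) //= upd_at.
have E1 : \sum_(D in P j | D != C) f j D #|upd s j C X j D| =
          \sum_(D in P j | D != C) f j D #|s j D|.
  by apply: eq_bigr => D /andP [_ HD]; rewrite upd_same // eqxx HD.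
have E2 : \sum_(i | i != j) \sum_(D in P i) f i D #|upd s j C X i D| =
          \sum_(i | i != j) \sum_(D in P i) f i D #|s i D|.
  apply: eq_bigr => i Hi; apply: eq_bigr => D _.
  by rewrite upd_same // (negbTE Hi).
rewrite E1 E2; lra.
Qed.

Lemma costS_upd s j (C X : {set Omega}) : C \in P j ->
  costS (upd s j C X) = costS s + mass mu C * (c j #|X| - c j #|s j C|).
Proof. by move=> HC; rewrite !costS_SL SL_upd // mulrBr. Qed.

Definition Val (s : profile n Omega) :=
  \sum_w mu w * (if (0 < mult P s w)%N then vs w else 0).

Lemma U_split s : U_CI P mu vs c s = Val s - costS s.
Proof. by rewrite /U_CI /Val /costS -sumrB; apply: eq_bigr => w _; rewrite mulrBr. Qed.

Lemma mult_eq s s' w : (forall i, inS s' i w = inS s i w) -> mult P s' w = mult P s w.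
Proof. by move=> H; rewrite /mult; apply: eq_card => i; rewrite !inE; apply: H. Qed.

Lemma multE s w : mult P s w = #|[set i | inS s i w]|.
Proof. by []. Qed.

Lemma uniq_owner s x i j : (mult P s x <= 1)%N -> inS s i x -> inS s j x = (j == i).
Proof.
move=> /card_le1_eqP H Hi; case: (eqVneq j i) => [->//|ne].
apply/negP => Hj; move/eqP: ne; apply.
by apply: H; rewrite inE.
Qed.

Lemma mult_gt0 s x : (0 < mult P s x)%N = [exists i, inS s i x].
Proof.
rewrite multE card_gt0; apply/set0Pn/existsP => [[i]|[i Hi]].
  by rewrite inE => Hi; exists i.
by exists i; rewrite inE.
Qed.

Hypothesis Hc0 : forall i, c i 0%N = 0.

Lemma delta_le_marg i k : (k < K i)%N -> c i k.+1 - c i k <= margK K c i.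
Proof.
move=> Hk; have E : K i = (k + (K i - k.+1)).+1 by rewrite -addSn subnKC.
move: E; move: (K i - k.+1)%N => d; elim: d k {Hk} => [|d IH] k E.
  by rewrite /margK E addn0 /=.
have /IH h1 : K i = (k.+1 + d).+1 by rewrite E addSnnS.
have /(Hconv (ltn0Sn k)) h2 : (k.+1 < K i)%N by rewrite E; lia.
move: h2 => /=; lra.
Qed.

Lemma delta_ge0 i k : (k < K i)%N -> 0 <= c i k.+1 - c i k.
Proof.
elim: k => [|k IH] Hk; first by rewrite Hc0 subr0; apply: Hcnn.
have h1 := IH (ltnW Hk).
have h2 := Hconv (k:=k.+1) (ltn0Sn k) Hk.
move: h2 => /=; lra.
Qed.

Lemma cost_gap i k : (k <= K i)%N -> c i (K i) - c i k <= (K i - k)%:R * margK K c i.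
Proof.
move=> Hk; have E : K i = (k + (K i - k))%N by rewrite subnKC.
rewrite [(K i - k)%N]/=; move: E; move: (K i - k)%N => d.
elim: d k {Hk} => [|d IH] k E.
  by rewrite E addn0 subrr mul0r.
have /IH h1 : K i = (k.+1 + d)%N by rewrite E addSnnS.
have /delta_le_marg h2 : (k < K i)%N by rewrite E; lia.
rewrite -addn1 natrD mulrDl mul1r; lra.
Qed.

Lemma sum_pt (T : finType) (f g : T -> R) u :
  (forall x, x != u -> f x = g x) -> \sum_x f x = \sum_x g x + (f u - g u).
Proof.
move=> H; rewrite (bigD1 u) //= [\sum_x g x](bigD1 u) //=.
rewrite (eq_bigr g); last by move=> x /H.
lra.
Qed.

Lemma sum_pt2 (T : finType) (f g : T -> R) u w : u != w ->
  (forall x, x != u -> x != w -> f x = g x) ->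
  \sum_x f x = \sum_x g x + (f u - g u) + (f w - g w).
Proof.
move=> ne H.
rewrite (@sum_pt _ f (fun x => if x == u then g u else f x) u); last first.
  by move=> x /negbTE ->.
rewrite eqxx (@sum_pt _ _ g w); last first.
  move=> x nw; case: (eqVneq x u) => [->//|nu]; exact: H.
rewrite eq_sym (negbTE ne); lra.
Qed.

Lemma Val_eq s s' : (forall x, (0 < mult P s' x)%N = (0 < mult P s x)%N) -> Val s' = Val s.
Proof. by move=> H; apply: eq_bigr => x _; rewrite H. Qed.

Lemma mass_ge0 i C : C \in P i -> 0 <= mass mu C.
Proof. by move=> HC; apply: ltW; apply: (Hmass HC). Qed.

Definition Pairs (s : profile n Omega) := [set p : 'I_n * Omega | inS s p.1 p.2].

Lemma dedup s : profile_ok P K s -> exists s', profile_ok P K s' /\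
  (forall w, (mult P s' w <= 1)%N) /\ U_CI P mu vs c s <= U_CI P mu vs c s'.
Proof.
elim/(@measure_ind _ (fun s => #|Pairs s|)): s => s IH Hs.
case: (classic (forall w, (mult P s w <= 1)%N)) => [H|].
  by exists s; split => //; split.
move=> /not_all_ex_not [w Hw].
have [i [i' [ne [Hi Hi']]]] : exists i i', i != i' /\ inS s i w /\ inS s i' w.
  apply: NNPP => Hno; apply: Hw; apply/card_le1_eqP => a b; rewrite !inE => Ha Hb.
  apply: NNPP => nab; apply: Hno; exists b, a; split; [by apply/eqP | by split].
pose C := cell i w.
have HC : C \in P i := cell_mem i w.
have HwC : w \in C := mem_cell i w.
pose s1 := upd s i C (s i C :\ w).
have inS1 : forall j x, inS s1 j x = inS s j x && ~~ ((j == i) && (x == w)).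
  move=> j x; rewrite /s1 inS_upd //.
  case: (eqVneq j i) => [->|] /=; last by rewrite andbT.
  case: (boolP (x \in C)) => HxC /=.
    by rewrite in_setD1 /inS (cell_eq HC HxC) andbC.
  case: (eqVneq x w) => [E|]; last by rewrite andbT.
  by move: HxC; rewrite E HwC.
have Hs1 : profile_ok P K s1.
  apply: upd_ok => //.
    apply: subset_trans (subsetDl _ _) _; exact: (Hs i C HC).1.
  apply: leq_trans (subset_leq_card (subsetDl _ _)) _; exact: (Hs i C HC).2.
have Hlt : (#|Pairs s1| < #|Pairs s|)%N.
  apply: proper_card; apply/properP; split.
    by apply/subsetP => p; rewrite !inE inS1 => /andP [].
  by exists (i, w); rewrite !inE /= ?inS1 ?Hi /= ?eqxx.
have [s' [Hs' [Hd Hle]]] := IH s1 Hlt Hs1.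
exists s'; split => //; split => //; apply: le_trans Hle.
rewrite !U_split.
have EV : Val s1 = Val s.
  apply: Val_eq => x.
  case: (eqVneq x w) => [->|nx]; last first.
    by rewrite (@mult_eq s s1 x) // => j; rewrite inS1 (negbTE nx) andbF andbT.
  rewrite !mult_gt0.
  apply/idP/idP => _; apply/existsP; [by exists i | exists i'].
  by rewrite inS1 Hi' /= eqxx andbT eq_sym ne.
rewrite EV /s1 costS_upd //.
have HwsC : w \in s i C by [].
have Ecard := cardsD1 w (s i C); rewrite HwsC /= add1n in Ecard.
have HK : (#|s i C :\ w| < K i)%N by rewrite -ltnS -Ecard ltnS; exact: (Hs i C HC).2.
rewrite Ecard.
have h1 := delta_ge0 HK.
have h2 := mass_ge0 HC.
have := mulr_ge0 h2 h1; lra.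
Qed.

Variable s0 : profile n Omega.
Hypothesis Hs0 : redundancy_free P K s0.

Definition Ag (s : profile n Omega) := [set x | [exists i, inS s i x && inS s0 i x]].
Definition Cov (s : profile n Omega) := [set x | (0 < mult P s x)%N].

Lemma compl_lt (A B : {set Omega}) : A \proper B -> (#|~: B| < #|~: A|)%N.
Proof.
move=> /proper_card H; have h1 := cardsC A; have h2 := cardsC B; lia.
Qed.

Lemma inS_rem s i w j x :
  inS (upd s i (cell i w) (s i (cell i w) :\ w)) j x = inS s j x && ~~ ((j == i) && (x == w)).
Proof.
rewrite inS_upd ?cell_mem //.
case: (eqVneq j i) => [->|] /=; last by rewrite andbT.
case: (boolP (x \in cell i w)) => HxC /=.
  by rewrite in_setD1 /inS (cell_eq (cell_mem i w) HxC) andbC.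
case: (eqVneq x w) => [E|]; last by rewrite andbT.
by move: HxC; rewrite E mem_cell.
Qed.

Lemma inS_add s i C w j x : C \in P i -> w \in C ->
  inS (upd s i C (w |: s i C)) j x = inS s j x || ((j == i) && (x == w)).
Proof.
move=> HC Hw; rewrite inS_upd //.
case: (eqVneq j i) => [->|] /=; last by rewrite orbF.
case: (boolP (x \in C)) => HxC /=.
  by rewrite in_setU1 /inS (cell_eq HC HxC) orbC.
case: (eqVneq x w) => [E|]; last by rewrite orbF.
by move: HxC; rewrite E Hw.
Qed.

Lemma mult_one s x j : (forall i, inS s i x = (i == j)) -> mult P s x = 1%N.
Proof.
move=> H; rewrite multE.
have -> : [set i | inS s i x] = [set j] by apply/setP => i; rewrite !inE H.
exact: cards1.
Qed.

Lemma rem_ok s i w : profile_ok P K s ->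
  profile_ok P K (upd s i (cell i w) (s i (cell i w) :\ w)).
Proof.
move=> Hs; have HC := cell_mem i w.
apply: upd_ok => //.
  apply: subset_trans (subsetDl _ _) _; exact: (Hs i _ HC).1.
apply: leq_trans (subset_leq_card (subsetDl _ _)) _; exact: (Hs i _ HC).2.
Qed.

Lemma add_ok s i C w : profile_ok P K s -> C \in P i -> w \in C -> w \notin s i C ->
  (#|s i C| < K i)%N -> profile_ok P K (upd s i C (w |: s i C)).
Proof.
move=> Hs HC Hw Hn Hlt; apply: upd_ok => //.
  by rewrite subUset sub1set Hw (Hs i C HC).1.
by rewrite cardsU1 Hn.
Qed.

Lemma aug s : profile_ok P K s -> (forall w, (mult P s w <= 1)%N) ->
  forall j C, C \in P j -> (#|s j C| < K j)%N ->
  exists s2, [/\ profile_ok P K s2, (forall w, (mult P s2 w <= 1)%N),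
    (exists w, ~~ (0 < mult P s w)%N /\
        forall x, (0 < mult P s2 x)%N = (x == w) || (0 < mult P s x)%N) &
    costS s2 = costS s + mass mu C * (c j #|s j C|.+1 - c j #|s j C|)].
Proof.
elim/(@measure_ind _ (fun s => #|~: Ag s|)): s => s IH Hs Hd j C HC Hlt.
have [w1 Hw10 Hw1] : exists2 w1, w1 \in s0 j C & w1 \notin s j C.
  apply: NNPP => H.
  have Hsub : s0 j C \subset s j C.
    apply/subsetP => x Hx; apply: NNPP => Hn; apply: H; exists x => //; exact/negP.
  have := subset_leq_card Hsub; rewrite (Hs0.2.1 j C HC); lia.
have Hw1C : w1 \in C := subsetP (Hs0.1 j C HC).1 w1 Hw10.
have ecell : cell j w1 = C := cell_eq HC Hw1C.
have nin : ~~ inS s j w1 by rewrite /inS ecell.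
have s0in : inS s0 j w1 by rewrite /inS ecell.
case: (boolP [exists k, inS s k w1]) => [/existsP [k Hk] | Hno].
- have nk : k != j by apply/eqP => E; move: nin; rewrite -E Hk.
  pose D := cell k w1.
  have HD : D \in P k := cell_mem k w1.
  pose sm := upd s k D (s k D :\ w1).
  have smC : sm j C = s j C by rewrite /sm upd_same //; rewrite eq_sym (negbTE nk).
  pose s1 := upd sm j C (w1 |: sm j C).
  have own : forall i, inS s i w1 = (i == k) := fun i => @uniq_owner s w1 k i (Hd w1) Hk.
  have inS1 : forall i x, inS s1 i x =
      (inS s i x && ~~ ((i == k) && (x == w1))) || ((i == j) && (x == w1)).
    by move=> i x; rewrite /s1 inS_add // /sm inS_rem.
  have inS1o : forall i x, x != w1 -> inS s1 i x = inS s i x.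
    by move=> i x nx; rewrite inS1 (negbTE nx) !andbF andbT orbF.
  have inS1w : forall i, inS s1 i w1 = (i == j).
    by move=> i; rewrite inS1 own eqxx !andbT andbN.
  have ok1 : profile_ok P K s1.
    apply: add_ok => //; first exact: rem_ok.
      by rewrite smC.
    by rewrite smC.
  have d1 : forall x, (mult P s1 x <= 1)%N.
    move=> x; case: (eqVneq x w1) => [->|nx]; first by rewrite (mult_one inS1w).
    by rewrite (@mult_eq s s1 x) // => i; exact: inS1o.
  have cov1 : forall x, (0 < mult P s1 x)%N = (0 < mult P s x)%N.
    move=> x; case: (eqVneq x w1) => [->|nx].
      rewrite (mult_one inS1w) (@mult_one s w1 k) // => i; exact: own.
    by rewrite (@mult_eq s s1 x) // => i; exact: inS1o.
  have nAg : w1 \notin Ag s.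
    rewrite inE; apply/existsP => [[i /andP [Hi H0]]].
    move: Hi; rewrite own => /eqP Ei; subst i.
    have := @uniq_owner s0 w1 j k (Hs0.2.2 w1) s0in.
    by rewrite H0 (negbTE nk).
  have Hm : (#|~: Ag s1| < #|~: Ag s|)%N.
    apply: compl_lt; apply/properP; split.
      apply/subsetP => x; case: (eqVneq x w1) => [->|nx]; first by rewrite (negbTE nAg).
      rewrite !inE => /existsP [i /andP [h1 h2]]; apply/existsP; exists i.
      by rewrite inS1o // h1 h2.
    exists w1 => //; rewrite inE; apply/existsP; exists j; by rewrite inS1w eqxx s0in.
  have s1kD : s1 k D = s k D :\ w1.
    rewrite /s1 upd_same; first by rewrite /sm upd_at.
    by rewrite (negbTE nk).
  have Hw1kD : w1 \in s k D by [].
  have EkD := cardsD1 w1 (s k D); rewrite Hw1kD /= add1n in EkD.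
  have Hlt1 : (#|s1 k D| < K k)%N.
    by rewrite s1kD -ltnS -EkD ltnS; exact: (Hs k D HD).2.
  have [s2 [ok2 d2 [w [nw Hcov]] Hcost]] := IH s1 Hm ok1 d1 k D HD Hlt1.
  exists s2; split => //.
    exists w; split; first by rewrite -cov1.
    by move=> x; rewrite Hcov cov1.
  rewrite Hcost s1kD -EkD /s1 costS_upd // smC /sm costS_upd //.
  rewrite cardsU1 Hw1 /= add1n.
  lra.
- have Hno' : forall i, inS s i w1 = false.
    by move=> i; apply/negP => Hi; move/existsP: Hno; apply; exists i.
  pose s2 := upd s j C (w1 |: s j C).
  have inS2 : forall i x, inS s2 i x = inS s i x || ((i == j) && (x == w1)).
    by move=> i x; rewrite /s2 inS_add.
  have inS2w : forall i, inS s2 i w1 = (i == j).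
    by move=> i; rewrite inS2 Hno' eqxx andbT.
  have inS2o : forall i x, x != w1 -> inS s2 i x = inS s i x.
    by move=> i x nx; rewrite inS2 (negbTE nx) andbF orbF.
  exists s2; split.
  + exact: add_ok.
  + move=> x; case: (eqVneq x w1) => [->|nx]; first by rewrite (mult_one inS2w).
    by rewrite (@mult_eq s s2 x) // => i; exact: inS2o.
  + exists w1; split; first by rewrite mult_gt0.
    move=> x; case: (eqVneq x w1) => [->|nx]; first by rewrite (mult_one inS2w).
    by rewrite (@mult_eq s s2 x) // => i; exact: inS2o.
  + by rewrite /s2 costS_upd // cardsU1 Hw1.
Qed.

Lemma fill s : profile_ok P K s -> (forall w, (mult P s w <= 1)%N) ->
  exists s', redundancy_free P K s' /\ U_CI P mu vs c s <= U_CI P mu vs c s'.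
Proof.
elim/(@measure_ind _ (fun s => #|~: Cov s|)): s => s IH Hs Hd.
case: (classic (forall i C, C \in P i -> #|s i C| = K i)) => [Hfull|].
  by exists s; split.
move=> /not_all_ex_not [j /not_all_ex_not [C H]].
have HC : C \in P j by apply: NNPP => nC; apply: H => /nC.
have Hne : #|s j C| <> K j by move=> E; apply: H => _.
have Hlt : (#|s j C| < K j)%N.
  by rewrite ltn_neqAle (Hs j C HC).2 andbT; apply/eqP.
have [s2 [ok2 d2 [w [nw Hcov]] Hcost]] := aug Hs Hd HC Hlt.
have Hm : (#|~: Cov s2| < #|~: Cov s|)%N.
  apply: compl_lt; apply/properP; split.
    by apply/subsetP => x; rewrite !inE Hcov => ->; rewrite orbT.
  by exists w; rewrite !inE ?Hcov ?eqxx.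
have [s' [Hs' Hle]] := IH s2 Hm ok2 d2.
exists s'; split => //; apply: le_trans Hle.
rewrite !U_split Hcost.
have EV : Val s2 = Val s + (mu w * vs w - mu w * 0).
  rewrite /Val (@sum_pt _ _ (fun x => mu x * (if (0 < mult P s x)%N then vs x else 0)) w).
    by rewrite Hcov eqxx (negbTE nw).
  by move=> x nx; rewrite Hcov (negbTE nx).
rewrite EV mulr0 subr0.
have h1 := delta_le_marg Hlt.
have h2 := HSV w HC.
have h3 := ler_wpM2l (mass_ge0 HC) h1.
lra.
Qed.

Lemma claimA s : profile_ok P K s ->
  exists s', redundancy_free P K s' /\ U_CI P mu vs c s <= U_CI P mu vs c s'.
Proof.
move=> Hs; have [s1 [Hs1 [Hd1 Hle1]]] := dedup Hs.
have [s' [Hs' Hle']] := fill Hs1 Hd1.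
by exists s'; split => //; apply: le_trans Hle'.
Qed.

Hypothesis HOC : ordinally_consistent P mu v vs.
Hypothesis HSSD : solitary_search_dominant P mu K c v.

Definition Psi (s : profile n Omega) :=
  \sum_x \sum_i (if inS s i x then mu x * v i 1%N x else 0).

Lemma mult_zero s x : (forall i, inS s i x = false) -> mult P s x = 0%N.
Proof.
move=> H; rewrite multE; apply/eqP; rewrite cards_eq0; apply/eqP/setP => i.
by rewrite !inE H.
Qed.

Lemma inner_one s x i (f : 'I_n -> R) : (forall j, inS s j x = (j == i)) ->
  \sum_j (if inS s j x then f j else 0) = f i.
Proof.
move=> H; rewrite (bigD1 i) //= H eqxx big1 ?addr0 // => j nj.
by rewrite H (negbTE nj).
Qed.

Lemma inner_zero s x (f : 'I_n -> R) : (forall j, inS s j x = false) ->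
  \sum_j (if inS s j x then f j else 0) = 0.
Proof. by move=> H; rewrite big1 // => j _; rewrite H. Qed.

Lemma swap_prop s : redundancy_free P K s ->
  (forall s', redundancy_free P K s' -> U_CI P mu vs c s' <= U_CI P mu vs c s) ->
  (forall s', redundancy_free P K s' -> U_CI P mu vs c s' = U_CI P mu vs c s ->
      Psi s' <= Psi s) ->
  forall i C u w, C \in P i -> u \in s i C -> w \in C -> mult P s w = 0%N ->
  mu w * v i 1%N w <= mu u * v i 1%N u.
Proof.
move=> [Hok [Hfull Hd]] Hmax Hpsi i C u w HC Hu HwC Hw0.
rewrite leNgt; apply/negP => Hlt.
have HuC : u \in C := subsetP (Hok i C HC).1 u Hu.
have inSu : inS s i u by rewrite /inS (cell_eq HC HuC).
have ownu : forall j, inS s j u = (j == i) := fun j => @uniq_owner s u i j (Hd u) inSu.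
have Hw0' : forall j, inS s j w = false.
  move=> j; apply/negP => Hj.
  have : (0 < mult P s w)%N by rewrite mult_gt0; apply/existsP; exists j.
  by rewrite Hw0.
have wnA : w \notin s i C by move: (Hw0' i); rewrite /inS (cell_eq HC HwC) => ->.
have nuw : u != w by apply/eqP => E; move: wnA; rewrite -E Hu.
pose X := w |: (s i C :\ u).
pose s' := upd s i C X.
have inS' : forall j x, inS s' j x = if (j == i) && (x \in C) then x \in X else inS s j x.
  by move=> j x; rewrite /s' inS_upd.
have inS'u : forall j, inS s' j u = false.
  move=> j; rewrite inS' HuC andbT; case: (eqVneq j i) => [_|nj].
    by rewrite !inE eqxx (negbTE nuw).
  by rewrite ownu (negbTE nj).
have inS'w : forall j, inS s' j w = (j == i).
  move=> j; rewrite inS' HwC andbT; case: (eqVneq j i) => [_|nj].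
    by rewrite !inE eqxx.
  by rewrite Hw0'.
have inS'o : forall j x, x != u -> x != w -> inS s' j x = inS s j x.
  move=> j x nu nw; rewrite inS'; case: (eqVneq j i) => [->|] //=.
  case: (boolP (x \in C)) => // HxC.
  by rewrite !inE (negbTE nw) nu /= /inS (cell_eq HC HxC).
have cardX : #|X| = K i.
  have E := cardsD1 u (s i C); rewrite Hu /= add1n in E.
  rewrite cardsU1 !inE (negbTE wnA) andbF /= add1n -E.
  exact: Hfull.
have RF' : redundancy_free P K s'.
  split; [|split].
  - apply: upd_ok => //; last by rewrite cardX.
    rewrite subUset sub1set HwC /=; apply: subset_trans (subsetDl _ _) _.
    exact: (Hok i C HC).1.
  - move=> j D HD; rewrite /s' /upd; case: ifP => [/andP [/eqP -> _] | _] //.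
    exact: Hfull.
  - move=> x; case: (eqVneq x u) => [->|nu]; first by rewrite (mult_zero inS'u).
    case: (eqVneq x w) => [->|nw]; first by rewrite (mult_one inS'w).
    by rewrite (@mult_eq s s' x) // => j; exact: inS'o.
have Ecost : costS s' = costS s by rewrite /s' costS_upd // cardX Hfull // subrr mulr0 addr0.
have EV : Val s' = Val s + (mu u * 0 - mu u * vs u) + (mu w * vs w - mu w * 0).
  rewrite /Val (@sum_pt2 _ _ (fun x => mu x * (if (0 < mult P s x)%N then vs x else 0)) u w) //.
    rewrite (mult_zero inS'u) (mult_one inS'w) (mult_one ownu) Hw0 //.
  move=> x nu nw; rewrite (@mult_eq s s' x) // => j; exact: inS'o.
have EP : Psi s' = Psi s + (0 - mu u * v i 1%N u) + (mu w * v i 1%N w - 0).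
  rewrite /Psi (@sum_pt2 _ _ (fun x => \sum_j (if inS s j x then mu x * v j 1%N x else 0)) u w) //.
    rewrite (inner_zero _ inS'u) (inner_one _ inS'w) (inner_one _ ownu) (inner_zero _ Hw0') //.
  move=> x nu nw; apply: eq_bigr => j _; rewrite inS'o //.
have Hoc := HOC HC HuC HwC Hlt.
have Hge : U_CI P mu vs c s <= U_CI P mu vs c s'.
  rewrite !U_split Ecost EV; lra.
have Heq : U_CI P mu vs c s' = U_CI P mu vs c s.
  by apply/eqP; rewrite eq_le Hmax.
have := Hpsi s' RF' Heq; rewrite EP; lra.
Qed.

Lemma key (A' B' : {set Omega}) (f g : Omega -> R) (h : R) d :
  #|A'| = (#|B'| + d)%N -> (forall u w, u \in A' -> w \in B' -> f w <= g u) ->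
  (forall u, u \in A' -> h <= g u) ->
  \sum_(w in B') f w + d%:R * h <= \sum_(u in A') g u.
Proof.
move=> Hc Hfg Hh.
case: (set_0Vmem A') => [E|[u0 Hu0]].
  move: Hc; rewrite E cards0 => /esym Hc.
  have Bd : #|B'| = 0%N by lia.
  have d0 : d = 0%N by lia.
  move/eqP: Bd; rewrite cards_eq0 => /eqP ->.
  by rewrite d0 !big_set0 mul0r addr0.
have [m Hm Hmin] := @arg_minP _ R _ u0 (fun u => u \in A') g Hu0.
have s1 : \sum_(w in B') f w <= \sum_(w in B') g m.
  by apply: ler_sum => w Hw; apply: Hfg.
have s2 : \sum_(u in A') g m <= \sum_(u in A') g u.
  by apply: ler_sum => u Hu; apply: Hmin.
have E1 : \sum_(w in B') g m = #|B'|%:R * g m by rewrite sumr_const mulr_natl.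
have E2 : \sum_(u in A') g m = #|B'|%:R * g m + d%:R * g m.
  by rewrite sumr_const Hc mulrnDr !mulr_natl.
rewrite E1 in s1; rewrite E2 in s2.
have h1 := Hh m Hm.
have h2 : d%:R * h <= d%:R * g m by apply: ler_wpM2l => //; apply: ler0n.
move: s1 s2 h2; set S1 := \sum_(w in B') f w; set S2 := \sum_(u in A') g u.
move=> s1 s2 h2.
lra.
Qed.

Lemma divmul (l a b x y : R) : 0 < l -> a / l * x <= b / l * y -> a * x <= b * y.
Proof.
move=> Hl H; have := ler_wpM2l (ltW Hl) H.
have e1 : l * (a / l * x) = a * x.
  by rewrite mulrCA mulrA divfK // gt_eqF.
have e2 : l * (b / l * y) = b * y.
  by rewrite mulrCA mulrA divfK // gt_eqF.
by rewrite e1 e2.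
Qed.

Lemma cell_sum (C B : {set Omega}) (g : Omega -> R) k : B \subset C ->
  \sum_(w in C) mu w * ((if w \in B then g w else 0) - k) =
  \sum_(w in B) mu w * g w - mass mu C * k.
Proof.
move=> sub; under eq_bigr do rewrite mulrBr.
rewrite sumrB /mass mulr_suml; congr (_ - _).
rewrite big_mkcond [RHS]big_mkcond; apply: eq_bigr => w _.
case: (boolP (w \in B)) => hB; first by rewrite (subsetP sub _ hB).
by case: (w \in C); rewrite ?mulr0.
Qed.

Lemma NE_of s : redundancy_free P K s ->
  (forall i C u w, C \in P i -> u \in s i C -> w \in C -> mult P s w = 0%N ->
     mu w * v i 1%N w <= mu u * v i 1%N u) ->
  pure_NE P K mu v c s.
Proof.
move=> [Hok [Hfull Hd]] Hswap; split => // i t Ht.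
rewrite /payoff /deviate eqxx (sum_cells i) [X in _ <= X](sum_cells i).
apply: ler_sum => C HC.
pose dev := deviate s i t.
have ecell : forall w, w \in C -> cell i w = C := fun w => cell_eq HC.
rewrite (eq_bigr (fun w => mu w * ((if w \in t C then v i (mult P dev w) w else 0) - c i #|t C|)));
  last by move=> w Hw; rewrite ecell.
rewrite [X in _ <= X](eq_bigr (fun w => mu w * ((if w \in s i C then v i 1%N w else 0) - c i #|s i C|)));
  last first.
  move=> w Hw; rewrite ecell //; case: ifP => // Hws.
  have Hin : inS s i w by rewrite /inS ecell.
  by rewrite (@mult_one s w i) // => j; exact: uniq_owner (Hd w) Hin.
have [HtC HtK] := Ht C HC.
have [HsC HsK] := Hok i C HC.
rewrite !cell_sum //.
set A := s i C; set B := t C.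
have Hmd : forall w, w \in B -> mult P dev w = if w \in A then 1%N else (mult P s w).+1.
  move=> w HwB; have HwC : w \in C := subsetP HtC w HwB.
  have -> : mult P dev w = #|i |: [set j | inS s j w]|.
    rewrite multE; apply: eq_card => j; rewrite !inE /inS /dev /deviate.
    case: (eqVneq j i) => [->|//]; by rewrite ecell // HwB.
  have HiS : inS s i w = (w \in A) by rewrite /inS ecell.
  rewrite cardsU1 inE HiS; case: ifP => HA /=.
    rewrite -multE (@mult_one s w i) // => j; apply: uniq_owner (Hd w) _.
    by rewrite HiS.
  by rewrite add1n.
pose hf := fun w => mu w * v i (if w \in A then 1%N else (mult P s w).+1) w.
rewrite (eq_bigr hf); last by move=> w Hw; rewrite Hmd.
pose a := fun w => mu w * v i 1%N w.
rewrite (big_setID A) [X in _ <= X - _](big_setID B) /=.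
rewrite [A :&: B]setIC.
have Ehf : \sum_(w in B :&: A) hf w = \sum_(w in B :&: A) a w.
  by apply: eq_bigr => w; rewrite inE => /andP [_ HA]; rewrite /hf HA.
rewrite Ehf.
have Hl := Hmass HC.
have Hc1 := HSSD HC.
have Hfg : forall u w, u \in A :\: B -> w \in B :\: A -> hf w <= a u.
  move=> u w; rewrite !inE => /andP [_ HuA] /andP [HwA HwB].
  have HuC := subsetP HsC u HuA; have HwC := subsetP HtC w HwB.
  rewrite /hf (negbTE HwA) /a.
  have := Hd w; case E: (mult P s w) => [|[|m]] // _.
    by apply: Hswap HC HuA HwC E.
  exact: divmul Hl (Hc1 u w HuC HwC).1.
have Hh : forall u, u \in A :\: B -> mass mu C * margK K c i <= a u.
  move=> u; rewrite inE => /andP [_ HuA]; have HuC := subsetP HsC u HuA.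
  have := (Hc1 u u HuC HuC).2.
  move=> H; have := ler_wpM2l (ltW Hl) H.
  have e1 : mass mu C * (mu u / mass mu C * v i 1%N u) = a u.
    by rewrite /a mulrCA mulrA divfK // gt_eqF.
  by rewrite e1.
have HK : #|A| = K i := Hfull i C HC.
have Hcard : #|A :\: B| = (#|B :\: A| + (K i - #|B|))%N.
  have h1 := cardsID B A; have h2 := cardsID A B; rewrite setIC in h2.
  have h3 : (#|B| <= K i)%N by exact: HtK.
  lia.
have Hkey := key Hcard Hfg Hh.
have Hgap := cost_gap HtK.
have H := ler_wpM2l (ltW Hl) Hgap.
have E1 : \sum_(i0 in B :&: A) mu i0 * v i 1%N i0 = \sum_(w in B :&: A) a w by [].
have E2 : \sum_(i0 in A :\: B) mu i0 * v i 1%N i0 = \sum_(u in A :\: B) a u by [].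
rewrite E1 E2.
move: Hkey H; rewrite /B.
set S1 := \sum_(w in _ :&: _) a w.
set S2 := \sum_(w in _ :\: _) hf w.
set S3 := \sum_(u in _ :\: _) a u.
move=> Hkey H; rewrite HK; lra.
Qed.

End Proofs.

Definition toP n (Omega : finType)
  (F : {ffun 'I_n -> {ffun {set Omega} -> {set Omega}}}) : profile n Omega :=
  fun i D => F i D.
Definition ofP n (Omega : finType) (s : profile n Omega) :
  {ffun 'I_n -> {ffun {set Omega} -> {set Omega}}} :=
  [ffun i => [ffun D => s i D]].
Lemma toP_ofP n (Omega : finType) (s : profile n Omega) : toP (ofP s) = s.
Proof.
apply: functional_extensionality => i; apply: functional_extensionality => D.
by rewrite /toP /ofP !ffunE.
Qed.

Theorem proposition3 (R : realFieldType) (n : nat) (Omega : finType)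
  (P : 'I_n -> {set {set Omega}}) (mu : Omega -> R) (K : 'I_n -> nat)
  (c : 'I_n -> nat -> R) (v : 'I_n -> nat -> Omega -> R) (vs : Omega -> R) :
  is_search_game P mu K c v vs ->
  ordinally_consistent P mu v vs ->
  solitary_search_dominant P mu K c v ->
  social_value_outweighs_cost P mu K c vs ->
  (exists s0 : profile n Omega, redundancy_free P K s0) ->
  exists s : profile n Omega,
    pure_NE P K mu v c s /\
    (forall s' : profile n Omega, profile_ok P K s' -> U_CI P mu vs c s' <= U_CI P mu vs c s).
Proof.
move=> [HP [[Hmu _] [Hmass [Hc _]]]] HOC HSSD HSV [s0 Hs0].
have Hc0 : forall i, c i 0%N = 0 := fun i => (Hc i).1.
have Hcnn : forall i k, (k <= K i)%N -> 0 <= c i k := fun i => (Hc i).2.1.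
have Hconv := fun i => (Hc i).2.2.
pose U := fun F => U_CI P mu vs c (toP F).
pose RFb := fun F : {ffun 'I_n -> {ffun {set Omega} -> {set Omega}}} =>
  if excluded_middle_informative (redundancy_free P K (toP F)) then true else false.
have RFbP : forall F, RFb F -> redundancy_free P K (toP F).
  by move=> F; rewrite /RFb; case: excluded_middle_informative.
have RFbI : forall s, redundancy_free P K s -> RFb (ofP s).
  move=> s Hs; rewrite /RFb; case: excluded_middle_informative => //.
  by rewrite toP_ofP.
have H0 := RFbI s0 Hs0.
have [F1 HF1 Hmax1] := @arg_maxP _ R _ (ofP s0) RFb U H0.
pose Q := fun F => RFb F && (U F == U F1).
have HQ1 : Q F1 by rewrite /Q HF1 eqxx.
have [F2 HF2 Hmax2] := @arg_maxP _ R _ F1 Q (fun F => Psi P mu v (toP F)) HQ1.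
move: HF2; rewrite /Q => /andP [HF2 /eqP HU2].
pose s := toP F2.
have Hs : redundancy_free P K s := RFbP F2 HF2.
have Hmax : forall s', redundancy_free P K s' -> U_CI P mu vs c s' <= U_CI P mu vs c s.
  move=> s' Hs'; have := Hmax1 (ofP s') (RFbI s' Hs').
  by rewrite /U toP_ofP -/s; rewrite /s -/(U F2) HU2.
have Hpsi : forall s', redundancy_free P K s' -> U_CI P mu vs c s' = U_CI P mu vs c s ->
    Psi P mu v s' <= Psi P mu v s.
  move=> s' Hs' E; have := Hmax2 (ofP s').
  rewrite toP_ofP; apply; rewrite /Q RFbI //=.
  by rewrite /U toP_ofP E /s -/(U F2) HU2.
exists s; split.
  apply: (NE_of HP Hmass Hconv HSSD Hs).
  move=> i C u w HC Hu Hw Hw0.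
  exact: (swap_prop HP HOC Hs Hmax Hpsi HC Hu Hw Hw0).
move=> s' Hs'.
have [s'' [Hs'' Hle]] := claimA HP Hmass Hcnn Hconv HSV Hc0 Hs0 Hs'.
exact: le_trans Hle (Hmax s'' Hs'').
Qed.
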